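(* Let $n\ge 3$ be odd. For every self-dual code $C$ in $\mathbb{F}_2^{n+1}$, $\{A^{-1}:A\in\mathcal{F}_C\}=\mathcal{F}_C$.
   Context: $\mathbb{F}_2$ is the binary field. A code $C\subseteq\mathbb{F}_2^{n+1}$ is self-dual if $C=C^\perp$ (standard dot product); then $\dim C=m:=\frac{n+1}{2}$. For $\mathbf{y}\in\mathbb{F}_2^{n+1}$, $\underline{\mathbf{y}}\in\mathbb{F}_2^n$ is $\mathbf{y}$ with its last entry deleted; $\mathbf{x}^2:=\mathbf{x}\mathbf{x}^{\top}$. Let $\mathfrak{B}_C$ be the set of bases of $C$, $\mathfrak{B}_C^2$ those bases containing an even number of vectors with last entry $1$. For $\mathcal{B}=\{\mathbf{y}_1,\ldots,\mathbf{y}_m\}\in\mathfrak{B}_C$ put $A'_{\mathcal{B}}=I_n+\sum_{i=1}^m\underline{\mathbf{y}_i}^2$ and $A''_{\mathcal{B}}=I_n+\sum_{i=1}^m\underline{\mathbf{y}_i}^2+(\underline{\mathbf{y}_1}+\cdots+\underline{\mathbf{y}_m})^2$. Define $\mathcal{F}_C=\{A'_{\mathcal{B}}:\mathcal{B}\in\mathfrak{B}_C^2\}\cup\{A''_{\mathcal{B}}:\mathcal{B}\in\mathfrak{B}_C\}$ if $m$ is even, and $\mathcal{F}_C=\{A'_{\mathcal{B}}:\mathcal{B}\in\mathfrak{B}_C^2\}$ if $m$ is odd. (All these matrices are invertible over $\mathbb{F}_2$.) *)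

(* Defs.v *)
From HB Require Import structures.
From mathcomp Require Import all_boot all_order all_algebra all_fingroup.
Set Implicit Arguments. Unset Strict Implicit. Unset Printing Implicit Defensive.
Import GRing.Theory.
Local Open Scope ring_scope.

Definition under (n : nat) (y : 'rV['F_2]_(n.+1)) : 'rV['F_2]_n :=
  \row_(j < n) y 0 (widen_ord (leqnSn n) j).

(* x^2 := x x^T for x a (column) vector; with row vectors this is x^T x,
   an n x n matrix *)
Definition sqv (n : nat) (x : 'rV['F_2]_n) : 'M['F_2]_n := x^T *m x.

Definition dotv (k : nat) (u v : 'rV['F_2]_k) : 'F_2 := (u *m v^T) 0 0.

Definition self_dual (k : nat) (C : {set 'rV['F_2]_k}) : Prop :=
  0 \in C /\ (forall x y, x \in C -> y \in C -> x + y \in C) /\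
  C = [set y | [forall x in C, dotv x y == 0]].

Definition is_basis (m k : nat) (C : {set 'rV['F_2]_k}) (Y : 'M['F_2]_(m, k)) : Prop :=
  row_free Y /\ forall x : 'rV['F_2]_k, (x \in C) = (x <= Y)%MS.

Definition even_last (m n : nat) (Y : 'M['F_2]_(m, n.+1)) : bool :=
  ~~ odd #|[set i | Y i ord_max == 1]|.

Definition Aprime (m n : nat) (Y : 'M['F_2]_(m, n.+1)) : 'M['F_2]_n :=
  1%:M + \sum_(i < m) sqv (under (row i Y)).

Definition Asecond (m n : nat) (Y : 'M['F_2]_(m, n.+1)) : 'M['F_2]_n :=
  1%:M + \sum_(i < m) sqv (under (row i Y)) + sqv (\sum_(i < m) under (row i Y)).

Definition inFC (n : nat) (C : {set 'rV['F_2]_(n.+1)}) (A : 'M['F_2]_n) : Prop :=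
  let m := (n.+1)./2 in
  (exists Y : 'M['F_2]_(m, n.+1), [/\ is_basis C Y, even_last Y & A = Aprime Y])
  \/ (~~ odd m /\ exists Y : 'M['F_2]_(m, n.+1), is_basis C Y /\ A = Asecond Y).

(* Main.v *)
Require Import Defs.
From HB Require Import structures.
From mathcomp Require Import all_boot all_order all_algebra all_fingroup.
Local Open Scope ring_scope.

Module Helpers.
Set Implicit Arguments. Unset Strict Implicit. Unset Printing Implicit Defensive.
Import GRing.Theory.
Local Open Scope ring_scope.

Section Alg.
Variable F : fieldType.
Hypothesis hF : forall x : F, x = 0 \/ x = 1.

Lemma h2 : (1 + 1 : F) = 0.
Proof.
case: (hF (1 + 1)) => // /eqP; rewrite -subr_eq0 addrK => /eqP.
by move/eqP; rewrite oner_eq0.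
Qed.

Lemma trD p q (A B : 'M[F]_(p, q)) : (A + B)^T = A^T + B^T.
Proof. by apply/matrixP => i j; rewrite !mxE. Qed.

Fact Id_key : unit. Proof. exact: tt. Qed.
Definition Id p : 'M[F]_p := locked_with Id_key 1%:M.
Fact rk_key : unit. Proof. exact: tt. Qed.
Definition rk p (x y : 'cV[F]_p) : 'M[F]_p := locked_with rk_key (x *m y^T).
Definition dt p (x y : 'cV[F]_p) : F := (x^T *m y) 0 0.

Lemma IdE p a b : Id p a b = (a == b)%:R. Proof. by rewrite /Id unlock mxE. Qed.
Lemma trId p : (Id p)^T = Id p.
Proof. rewrite /Id unlock. by apply/matrixP => i j; rewrite !mxE eq_sym. Qed.
Lemma mulIdmx p q (A : 'M[F]_(p,q)) : Id p *m A = A. Proof. by rewrite /Id unlock mul1mx. Qed.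
Lemma mulmxId p q (A : 'M[F]_(p,q)) : A *m Id q = A. Proof. by rewrite /Id unlock mulmx1. Qed.

Lemma rkE p (x y : 'cV[F]_p) a b : rk x y a b = x a 0 * y b 0.
Proof. by rewrite /rk !unlock !mxE big_ord1 !mxE. Qed.

Lemma rkM p (x y z w : 'cV[F]_p) : rk x y *m rk z w = dt y z *: rk x w.
Proof.
rewrite /rk !unlock -mulmxA (mulmxA y^T).
have -> : y^T *m z = (dt y z)%:M by apply: mx11_scalar.
by rewrite mul_scalar_mx scalemxAr.
Qed.

Lemma rkMv p (x y z : 'cV[F]_p) : rk x y *m z = dt y z *: x.
Proof.
rewrite /rk !unlock -mulmxA.
have -> : y^T *m z = (dt y z)%:M by apply: mx11_scalar.
by rewrite mul_mx_scalar.
Qed.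

Lemma rk_tr p (x y : 'cV[F]_p) : (rk x y)^T = rk y x.
Proof. by rewrite /rk !unlock trmx_mul trmxK. Qed.
Lemma rkDl p (x y z : 'cV[F]_p) : rk (x + y) z = rk x z + rk y z.
Proof. by rewrite /rk !unlock mulmxDl. Qed.
Lemma rkDr p (x y z : 'cV[F]_p) : rk z (x + y) = rk z x + rk z y.
Proof. by rewrite /rk !unlock trD mulmxDr. Qed.
Lemma dtC p (x y : 'cV[F]_p) : dt x y = dt y x.
Proof. by rewrite /dt !mxE; apply: eq_bigr => i _; rewrite !mxE mulrC. Qed.
Lemma dtE p (x y : 'cV[F]_p) : dt x y = \sum_i x i 0 * y i 0.
Proof. by rewrite /dt !mxE; apply: eq_bigr => i _; rewrite !mxE. Qed.

End Alg.

Arguments Id {F} p.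


Ltac expand :=
  rewrite ?trD ?trId ?rk_tr ?rkDl ?rkDr ?mulmxDl ?mulmxDr ?mulIdmx ?mulmxId ?rkM ?rkMv
     -?scalemxAl -?scalemxAr ?rkM ?rkMv.

Lemma mx_char2 (F : fieldType) (hF : forall x : F, x = 0 \/ x = 1) p q (A : 'M[F]_(p,q)) : A + A = 0.
Proof. by apply/matrixP => i j; rewrite !mxE -mulr2n -mulr_natr /= -[2%:R]/(1 + 1) (h2 hF) mulr0. Qed.

Lemma mx_char2_eq (F : fieldType) (hF : forall x : F, x = 0 \/ x = 1) p q (A B : 'M[F]_(p,q)) :
  A + B = 0 -> A = B.
Proof. by move=> H; rewrite -[B]add0r -H -addrA (mx_char2 hF) addr0. Qed.

Fixpoint sumN (V : zmodType) (env : seq V) (i : nat) (ks : seq nat) : V :=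
  match ks with
  | [::] => nth 0 env i
  | j :: js => nth 0 env i + sumN env j js
  end.

Lemma sumN_big (V : zmodType) (env : seq V) i ks :
  sumN env i ks = \sum_(k <- i :: ks) nth 0 env k.
Proof.
elim: ks i => [|j js IH] i /=; first by rewrite big_seq1.
by rewrite IH big_cons.
Qed.

Lemma big_even (V : zmodType) (h : forall v : V, v + v = 0) (f : nat -> V) (s : seq nat) :
  all (fun k => ~~ odd (count_mem k s)) s -> \sum_(k <- s) f k = 0.
Proof.
move: {2}(size s) (leqnn (size s)) => N; elim: N s => [|N IH] [|x s] Hs Hall;
  try by rewrite big_nil.
  by [].
have Hall' := allP Hall.
have Hx := Hall' x (mem_head x s).
have xs : x \in s.
  move: Hx; rewrite /= eqxx add1n /=.
  by rewrite -has_pred1 has_count; case: (count _ s).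
have Hp := perm_to_rem xs.
rewrite big_cons (perm_big _ Hp) big_cons addrA h add0r.
apply: IH.
  rewrite size_rem //; move: Hs => /=; rewrite ltnS => Hs.
  by apply: leq_trans Hs; rewrite -ltnS prednK // -has_predT; apply/hasP; exists x.
apply/allP => k Hk.
have Hks : k \in x :: s by rewrite inE (mem_rem Hk) orbT.
have := Hall' k Hks.
rewrite /= (seq.permP Hp) /=.
by case: (x == k); rewrite /= ?negbK.
Qed.

Lemma sumN_even (V : zmodType) (h : forall v : V, v + v = 0) (env : seq V) i ks :
  all (fun k => ~~ odd (count_mem k (i :: ks))) (i :: ks) -> sumN env i ks = 0.
Proof. by move=> H; rewrite sumN_big; apply: big_even. Qed.

Ltac index_of a env :=
  lazymatch env with
  | a :: _ => constr:(0%N)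
  | _ :: ?rest => let r := index_of a rest in constr:(S r)
  end.

Ltac atoms S :=
  lazymatch S with
  | ?x + ?r => let l := atoms r in constr:(x :: l)
  | ?x => constr:([:: x])
  end.

Ltac idxs S env :=
  lazymatch S with
  | ?x + ?r => let i := index_of x env in let l := idxs r env in constr:(i :: l)
  | ?x => let i := index_of x env in constr:([:: i])
  end.

Ltac cancel hF :=
  apply: (mx_char2_eq hF); rewrite -?addrA ?addr0 ?add0r;
  lazymatch goal with
  | |- 0 = 0 => reflexivity
  | |- ?S = 0 =>
    let env := atoms S in
    let ks := idxs S env in
    lazymatch ks with
    | ?i0 :: ?rest => change (sumN env i0 rest = 0); apply: (sumN_even (fun v => mx_char2 hF v)); vm_compute; reflexivity
    end
  end.


Ltac finish hF facts :=
  expand; rewrite ?facts ?scale0r ?scale1r ?addr0 ?add0r; cancel hF.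

Section Ids.
Variable F : fieldType.
Hypothesis hF : forall x : F, x = 0 \/ x = 1.

Lemma inv_key m n (U : 'M[F]_(m, n)) (c : 'cV_m) (M N : 'M_m) :
  U *m U^T = rk c c -> M + N + M *m rk c c *m N = 0 ->
  (Id n + U^T *m M *m U) *m (Id n + U^T *m N *m U) = Id n.
Proof.
move=> HU HMN.
rewrite mulmxDl mulIdmx mulmxDr mulmxId.
have -> : U^T *m M *m U *m (U^T *m N *m U) = U^T *m (M *m rk c c *m N) *m U.
  by rewrite -HU !mulmxA.
rewrite -addrA.
have -> : U^T *m N *m U + (U^T *m M *m U + U^T *m (M *m rk c c *m N) *m U) =
   U^T *m (M + N + M *m rk c c *m N) *m U.
  by rewrite !mulmxDr !mulmxDl addrA [U^T *m N *m U + _]addrC.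
by rewrite HMN mulmx0 mul0mx addr0.
Qed.

Lemma id_a m (c : 'cV[F]_m) : dt c c = 0 ->
  Id m + (Id m + rk c c) + Id m *m rk c c *m (Id m + rk c c) = 0.
Proof. move=> H1. finish hF (H1). Qed.


Lemma rk00 m : rk (0 : 'cV[F]_m) 0 = 0.
Proof. by rewrite /rk !unlock mul0mx. Qed.

Lemma gram_a2 m (c e : 'cV[F]_m) : dt c c = 0 -> dt e c = 0 -> dt e e = 1 ->
  (Id m + rk c e + rk e c)^T *m (Id m + rk c e + rk e c) = Id m + rk c c.
Proof. move=> H1 H2 H3; have H4 : dt c e = 0 by rewrite dtC. finish hF (H1, H2, H3, H4). Qed.

Lemma vec_a2 m (c e : 'cV[F]_m) : dt c c = 0 -> dt e c = 0 -> dt e e = 1 ->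
  (Id m + rk c e + rk e c) *m c = c.
Proof. move=> H1 H2 H3; have H4 : dt c e = 0 by rewrite dtC. finish hF (H1, H2, H3, H4). Qed.

Lemma sq_a2 m (c e : 'cV[F]_m) : dt c c = 0 -> dt e c = 0 -> dt e e = 1 ->
  (Id m + rk c e + rk e c) *m (Id m + rk c e + rk e c) = Id m + rk c c.
Proof. move=> H1 H2 H3; have H4 : dt c e = 0 by rewrite dtC. finish hF (H1, H2, H3, H4). Qed.

Lemma sq_cc m (c : 'cV[F]_m) : dt c c = 0 -> (Id m + rk c c) *m (Id m + rk c c) = Id m.
Proof. move=> H1. finish hF (H1). Qed.

Lemma id_b1 m (c o : 'cV[F]_m) : dt c c = 1 -> dt o c = 1 -> dt o o = 0 ->
  Id m + rk o o + (Id m + rk o o + rk (c + o) (c + o)) +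
  (Id m + rk o o) *m rk c c *m (Id m + rk o o + rk (c + o) (c + o)) = 0.
Proof. move=> H1 H2 H3; have H4 : dt c o = 1 by rewrite dtC. finish hF (H1, H2, H3, H4). Qed.

Lemma gram_b1 m (c o : 'cV[F]_m) : dt c c = 1 -> dt o c = 1 -> dt o o = 0 ->
  (Id m + rk (c + o) c)^T *m (Id m + rk (c + o) c) = Id m + rk o o + rk (c + o) (c + o).
Proof. move=> H1 H2 H3; have H4 : dt c o = 1 by rewrite dtC. finish hF (H1, H2, H3, H4). Qed.

Lemma vec_b1 m (c o : 'cV[F]_m) : dt c c = 1 -> dt o c = 1 -> dt o o = 0 ->
  (Id m + rk (c + o) c) *m c = o.
Proof. move=> H1 H2 H3; have H4 : dt c o = 1 by rewrite dtC. finish hF (H1, H2, H3, H4). Qed.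

Lemma sq_b1 m (c o : 'cV[F]_m) : dt c c = 1 -> dt o c = 1 -> dt o o = 0 ->
  (Id m + rk (c + o) c) *m (Id m + rk (c + o) c) = Id m.
Proof. move=> H1 H2 H3; have H4 : dt c o = 1 by rewrite dtC. finish hF (H1, H2, H3, H4). Qed.

Lemma id_b2 m (c o : 'cV[F]_m) : dt c c = 0 -> dt o c = 0 -> dt o o = 0 ->
  Id m + rk o o + (Id m + rk o o + rk c c) +
  (Id m + rk o o) *m rk c c *m (Id m + rk o o + rk c c) = 0.
Proof. move=> H1 H2 H3; have H4 : dt c o = 0 by rewrite dtC. finish hF (H1, H2, H3, H4). Qed.

Lemma gram_b3 m (c o e : 'cV[F]_m) :
  dt o o = 0 -> dt o c = 0 -> dt c c = 0 -> dt e o = 1 -> dt e c = 1 -> dt e e = 1 ->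
  (Id m + rk (o+c) e + rk (c+e) (o+c))^T *m (Id m + rk (o+c) e + rk (c+e) (o+c))
   = Id m + rk o o + rk c c.
Proof.
move=> H1 H2 H3 H4 H5 H6.
have H7 : dt c o = 0 by rewrite dtC.
have H8 : dt o e = 1 by rewrite dtC.
have H9 : dt c e = 1 by rewrite dtC.
finish hF (H1, H2, H3, H4, H5, H6, H7, H8, H9).
Qed.

Lemma vec_b3 m (c o e : 'cV[F]_m) :
  dt o o = 0 -> dt o c = 0 -> dt c c = 0 -> dt e o = 1 -> dt e c = 1 -> dt e e = 1 ->
  (Id m + rk (o+c) e + rk (c+e) (o+c)) *m c = o.
Proof.
move=> H1 H2 H3 H4 H5 H6.
have H7 : dt c o = 0 by rewrite dtC.
have H8 : dt o e = 1 by rewrite dtC.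
have H9 : dt c e = 1 by rewrite dtC.
finish hF (H1, H2, H3, H4, H5, H6, H7, H8, H9).
Qed.

Lemma sq_b3 m (c o e : 'cV[F]_m) :
  dt o o = 0 -> dt o c = 0 -> dt c c = 0 -> dt e o = 1 -> dt e c = 1 -> dt e e = 1 ->
  (Id m + rk (o+c) e + rk (c+e) (o+c)) *m (Id m + rk (o+c) e + rk (c+e) (o+c)) = Id m.
Proof.
move=> H1 H2 H3 H4 H5 H6.
have H7 : dt c o = 0 by rewrite dtC.
have H8 : dt o e = 1 by rewrite dtC.
have H9 : dt c e = 1 by rewrite dtC.
finish hF (H1, H2, H3, H4, H5, H6, H7, H8, H9).
Qed.

End Ids.




Lemma F2P (x : 'F_2) : x = 0 \/ x = 1.
Proof. by case: x => [[|[|k]]] // Hk; [left|right]; apply/val_inj. Qed.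

Lemma F2_mul (x : 'F_2) : x * x = x.
Proof. by case: (F2P x) => ->; apply/eqP. Qed.

Lemma F2_eq (x y : 'F_2) : x + y = 0 -> x = y.
Proof. by case: (F2P x) => ->; case: (F2P y) => -> //; move/eqP. Qed.

Lemma F2_nat k : (k%:R : 'F_2) = (odd k)%:R.
Proof.
elim: k => // k IH; rewrite -[k.+1]addn1 natrD IH /= oddD /=.
by case: (odd k) => //=; apply/eqP.
Qed.

Definition Umx m n (Y : 'M['F_2]_(m, n.+1)) : 'M['F_2]_(m, n) :=
  \matrix_(i, j) Y i (widen_ord (leqnSn n) j).
Definition cvec m n (Y : 'M['F_2]_(m, n.+1)) : 'cV['F_2]_m := \col_i Y i ord_max.
Definition ones m : 'cV['F_2]_m := const_mx 1.

Lemma Id1 p : Id p = 1%:M :> 'M['F_2]_p.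
Proof. by rewrite /Id unlock. Qed.

Lemma sum_sqv m n (Y : 'M['F_2]_(m, n.+1)) :
  \sum_(i < m) sqv (under (row i Y)) = (Umx Y)^T *m Umx Y.
Proof.
apply/matrixP => a b; rewrite !mxE summxE; apply: eq_bigr => i _.
by rewrite !mxE big_ord1 !mxE.
Qed.

Lemma sum_under m n (Y : 'M['F_2]_(m, n.+1)) :
  \sum_(i < m) under (row i Y) = (ones m)^T *m Umx Y.
Proof.
apply/matrixP => a b; rewrite !mxE summxE; apply: eq_bigr => i _.
by rewrite !mxE mul1r.
Qed.

Lemma AprimeE m n (Y : 'M['F_2]_(m, n.+1)) :
  Aprime Y = Id n + (Umx Y)^T *m Id m *m Umx Y.
Proof. by rewrite /Aprime sum_sqv !Id1 mulmx1. Qed.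

Lemma AsecondE m n (Y : 'M['F_2]_(m, n.+1)) :
  Asecond Y = Id n + (Umx Y)^T *m (Id m + rk (ones m) (ones m)) *m Umx Y.
Proof.
rewrite /Asecond sum_sqv sum_under /sqv !Id1 /rk unlock mulmxDr mulmxDl mulmx1 addrA.
by rewrite trmx_mul trmxK !mulmxA.
Qed.

Lemma Umx_mul m n (P : 'M['F_2]_m) (Y : 'M['F_2]_(m, n.+1)) : Umx (P *m Y) = P *m Umx Y.
Proof. by apply/matrixP => a b; rewrite !mxE; apply: eq_bigr => i _; rewrite !mxE. Qed.

Lemma cvec_mul m n (P : 'M['F_2]_m) (Y : 'M['F_2]_(m, n.+1)) : cvec (P *m Y) = P *m cvec Y.
Proof. by apply/matrixP => a b; rewrite !mxE; apply: eq_bigr => i _; rewrite !mxE. Qed.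

Lemma Aprime_mul m n (P : 'M['F_2]_m) (Y : 'M['F_2]_(m, n.+1)) :
  Aprime (P *m Y) = Id n + (Umx Y)^T *m (P^T *m P) *m Umx Y.
Proof. by rewrite AprimeE Umx_mul mulmxId trmx_mul !mulmxA. Qed.

Lemma F2_sum_card m (f : 'I_m -> 'F_2) :
  \sum_i f i = (#|[set i | f i == 1]|)%:R.
Proof.
rewrite -sum1_card natr_sum [RHS]big_mkcond /=; apply: eq_bigr => i _.
by rewrite inE; case: (F2P (f i)) => ->.
Qed.

Lemma dt_self m (c : 'cV['F_2]_m) : dt c c = dt (ones m) c.
Proof. by rewrite !dtE; apply: eq_bigr => i _; rewrite F2_mul mxE mul1r. Qed.

Lemma dt_ones m : dt (ones m) (ones m) = m%:R.
Proof. by rewrite dtE (eq_bigr (fun _ => 1)) => [|i _]; rewrite ?sumr_const ?card_ord // !mxE mulr1. Qed.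

Lemma even_lastE m n (Y : 'M['F_2]_(m, n.+1)) :
  even_last Y = (dt (cvec Y) (cvec Y) == 0).
Proof.
rewrite dt_self dtE (eq_bigr (fun i => Y i ord_max)) => [|i _]; last by rewrite !mxE mul1r.
by rewrite F2_sum_card F2_nat /even_last; case: (odd _).
Qed.

Lemma orth n (C : {set 'rV['F_2]_(n.+1)}) m (Y : 'M['F_2]_(m, n.+1)) :
  self_dual C -> is_basis C Y -> Umx Y *m (Umx Y)^T = rk (cvec Y) (cvec Y).
Proof.
move=> [_ [_ HC]] [_ HB].
have Hrow i : row i Y \in C by rewrite HB row_sub.
have Hd i j : dotv (row i Y) (row j Y) = 0.
  have := Hrow j; rewrite {1}HC inE => /forallP /(_ (row i Y)) /implyP.
  by move=> /(_ (Hrow i)) /eqP.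
apply/matrixP => a b; rewrite rkE !mxE.
have := Hd a b; rewrite /dotv !mxE big_ord_recr /= => H.
apply: F2_eq; rewrite -[RHS]H; congr (_ + _).
  by apply: eq_bigr => k _; rewrite !mxE.
by rewrite !mxE.
Qed.

Lemma basis_mul n (C : {set 'rV['F_2]_(n.+1)}) m (Y : 'M['F_2]_(m, n.+1)) (P Q : 'M['F_2]_m) :
  is_basis C Y -> P *m Q = 1%:M -> is_basis C (P *m Y).
Proof.
move=> [Hf HB] HPQ.
have Pu : P \in unitmx by case: (mulmx1_unit HPQ).
have Pf : row_full P by rewrite row_full_unit.
split.
  by rewrite /row_free (eqmxMfull Y Pf).
by move=> x; rewrite HB (eqmxMfull Y Pf).
Qed.

Lemma inv_of n (A B : 'M['F_2]_n) : A *m B = 1%:M -> invmx A = B.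
Proof.
move=> H; have [Au _] := mulmx1_unit H.
by rewrite -[invmx A]mulmx1 -H mulmxA mulVmx // mul1mx.
Qed.

Definition evec m (t : 'I_m) : 'cV['F_2]_m := \col_i (i == t)%:R.

Lemma dt_e m (t : 'I_m) (c : 'cV['F_2]_m) : dt (evec t) c = c t 0.
Proof.
rewrite dtE (bigD1 t) //= big1 => [|i /negbTE Hi]; rewrite !mxE ?eqxx ?Hi ?mul1r ?mul0r ?addr0 //.
Qed.

Lemma evec_self m (t : 'I_m) : dt (evec t) (evec t) = 1.
Proof. by rewrite dt_e !mxE eqxx. Qed.

Lemma main_inv n (C : {set 'rV['F_2]_(n.+1)}) (hC : self_dual C) (A : 'M['F_2]_n) :
  inFC C A -> inFC C (invmx A).
Proof.
rewrite /inFC /=; generalize (uphalf n) => m.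
have Hoo_m : dt (ones m) (ones m) = 0 -> ~~ odd m.
  by rewrite dt_ones F2_nat; case: (odd m) => //; move/eqP.
case=> [[Y [HY Hev ->]] | [Hm [Y [HY ->]]]].
- set U := Umx Y; set c := cvec Y; set o := ones m.
  have HU : U *m U^T = rk c c by apply: orth hC HY.
  have Hcc : dt c c = 0 by move: Hev; rewrite even_lastE => /eqP.
  have -> : invmx (Aprime Y) = Id n + U^T *m (Id m + rk c c) *m U.
    rewrite AprimeE; apply: inv_of; rewrite -(Id1 n).
    exact: (inv_key HU (id_a F2P Hcc)).
  case: (pickP (fun t => c t 0 != 1)) => [t Ht | Hall].
  + have Hct : c t 0 = 0 by case: (F2P (c t 0)) Ht => ->.
    set e := evec t.
    have Hec : dt e c = 0 by rewrite dt_e.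
    have Hee : dt e e = 1 by apply: evec_self.
    left; exists ((Id m + rk c e + rk e c) *m Y); split.
    * apply: (basis_mul (Q := (Id m + rk c e + rk e c) *m (Id m + rk c c))) HY _.
      by rewrite mulmxA (sq_a2 F2P Hcc Hec Hee) (sq_cc F2P Hcc) Id1.
    * by rewrite even_lastE cvec_mul -/c (vec_a2 F2P Hcc Hec Hee) Hcc.
    * by rewrite Aprime_mul (gram_a2 F2P Hcc Hec Hee).
  + have Hco : c = o.
      apply/matrixP => i j; rewrite ord1; have := Hall i.
      by rewrite /= /c /o !mxE => /negbFE/eqP.
    right; split.
      by apply: Hoo_m; rewrite -/o -Hco.
    by exists Y; split => //; rewrite AsecondE -/U -/o -Hco.
- set U := Umx Y; set c := cvec Y; set o := ones m.
  have HU : U *m U^T = rk c c by apply: orth hC HY.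
  have Hoo : dt o o = 0 by rewrite dt_ones F2_nat (negbTE Hm).
  have Hsc : dt c c = dt o c by apply: dt_self.
  case: (F2P (dt o c)) => Hs.
  + have Hcc : dt c c = 0 by rewrite Hsc.
    have -> : invmx (Asecond Y) = Id n + U^T *m (Id m + rk o o + rk c c) *m U.
      rewrite AsecondE; apply: inv_of; rewrite -(Id1 n).
      exact: (inv_key HU (id_b2 F2P Hcc Hs Hoo)).
    case: (pickP (fun t => c t 0 != 0)) => [t Ht | Hall].
    * have Hct : c t 0 = 1 by case: (F2P (c t 0)) Ht => ->.
      set e := evec t.
      have Hec : dt e c = 1 by rewrite dt_e.
      have Heo : dt e o = 1 by rewrite dt_e mxE.
      have Hee : dt e e = 1 by apply: evec_self.
      left; exists ((Id m + rk (o+c) e + rk (c+e) (o+c)) *m Y); split.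
      -- apply: (basis_mul (Q := (Id m + rk (o+c) e + rk (c+e) (o+c)))) HY _.
         by rewrite (sq_b3 F2P Hoo Hs Hcc Heo Hec Hee) Id1.
      -- by rewrite even_lastE cvec_mul -/c (vec_b3 F2P Hoo Hs Hcc Heo Hec Hee) Hoo.
      -- by rewrite Aprime_mul (gram_b3 F2P Hoo Hs Hcc Heo Hec Hee).
    * have Hc0 : c = 0.
        apply/matrixP => i j; rewrite ord1; have := Hall i.
        by rewrite /= /c !mxE => /negbFE/eqP.
      right; split => //.
      by exists Y; split => //; rewrite AsecondE -/U -/o Hc0 rk00 addr0.
  + have Hcc : dt c c = 1 by rewrite Hsc.
    have -> : invmx (Asecond Y) = Id n + U^T *m (Id m + rk o o + rk (c + o) (c + o)) *m U.
      rewrite AsecondE; apply: inv_of; rewrite -(Id1 n).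
      exact: (inv_key HU (id_b1 F2P Hcc Hs Hoo)).
    left; exists ((Id m + rk (c + o) c) *m Y); split.
    * apply: (basis_mul (Q := (Id m + rk (c + o) c))) HY _.
      by rewrite (sq_b1 F2P Hcc Hs Hoo) Id1.
    * by rewrite even_lastE cvec_mul -/c (vec_b1 F2P Hcc Hs Hoo) Hoo.
    * by rewrite Aprime_mul (gram_b1 F2P Hcc Hs Hoo).
Qed.
End Helpers.
Import Helpers.
Unset Implicit Arguments. Set Strict Implicit. Set Printing Implicit Defensive.

Theorem theorem8p6 (n : nat) (hodd : odd n) (hn : (3 <= n)%N)
  (C : {set 'rV['F_2]_(n.+1)}) (hC : self_dual C) (A : 'M['F_2]_n) :
  (exists B : 'M['F_2]_n, inFC C B /\ A = invmx B) <-> inFC C A.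
Proof.
split.
- by case=> B [HB ->]; apply: main_inv.
- move=> HA; exists (invmx A); split; first exact: main_inv.
  by rewrite invmxK.
Qed.
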